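(* Let $C$ be a set of pairwise disjoint lines on the Fermat cubic ${\rm F}_3$ and put $C^s=C\cap\mathcal{L}^s$ for $s=0,1,2$. If $\#C^s=3$ for some $s$, then there exists $k\in\{0,1,2\}\setminus\{s\}$ such that $C^k=\emptyset$.
   Context: ${\rm F}_3\subset\mathbb{P}^3(\mathbb{C})$ is the surface $x^3-y^3-z^3+w^3=0$. Let $\eta$ be a primitive cube root of unity and $v=-1$. For $k,i\in\{0,1,2\}$ define $L^0_{k,i}:\{y=\eta^i x,\ w=\eta^k z\}$, $L^1_{k,i}:\{x=\eta^{k+i}z,\ y=\eta^i w\}$, $L^2_{k,i}:\{x=v\eta^i w,\ y=v\eta^{k+i}z\}$, and $\mathcal{L}^s=\{L^s_{k,i}\}_{k,i}$; the 27 lines on ${\rm F}_3$ are exactly $\mathcal{L}^0\cup\mathcal{L}^1\cup\mathcal{L}^2$. *)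

(* Defs.v *)
From HB Require Import structures.
From mathcomp Require Import all_boot all_order all_algebra.
Set Implicit Arguments. Unset Strict Implicit. Unset Printing Implicit Defensive.
Import Order.TTheory GRing.Theory Num.Theory.
Local Open Scope ring_scope.

(* Homogeneous coordinates (x, y, z, w) of a point of P^3 over R. *)
Definition coord4 (R : Type) := (R * R * R * R)%type.

Definition line_index := ('I_3 * 'I_3 * 'I_3)%type.

(* The (affine cone over the) line L^s_{k,i}, with eta a primitive cube root
   of unity and v = -1. *)
Definition on_line (R : nzRingType) (eta : R) (l : line_index) (p : coord4 R) : Prop :=
  let: (s, k, i) := l in
  let: (x, y, z, w) := p in
  let v := (-1 : R) in
  match nat_of_ord s with
  | 0%N => y = eta ^+ i * x /\ w = eta ^+ k * z
  | 1%N => x = eta ^+ (k + i) * z /\ y = eta ^+ i * w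
  | _   => x = v * eta ^+ i * w /\ y = v * eta ^+ (k + i) * z
  end.

Definition nonzero4 (R : nzRingType) (p : coord4 R) : Prop :=
  let: (x, y, z, w) := p in ~ (x = 0 /\ y = 0 /\ z = 0 /\ w = 0).

(* Two lines of P^3 are disjoint iff they share no projective point, i.e.
   no nonzero vector of R^4 lies on both. *)
Definition lines_disjoint (R : nzRingType) (eta : R) (l1 l2 : line_index) : Prop :=
  forall p : coord4 R, nonzero4 p -> on_line eta l1 p -> on_line eta l2 p -> False.

Definition pairwise_disjoint (R : nzRingType) (eta : R) (C : {set line_index}) : Prop :=
  forall l1 l2, l1 \in C -> l2 \in C -> l1 != l2 -> lines_disjoint eta l1 l2.

Definition Cpart (C : {set line_index}) (s : 'I_3) : {set line_index} :=
  [set l in C | l.1.1 == s].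

(* Main.v *)
Require Import Defs.
From HB Require Import structures.
From mathcomp Require Import all_boot all_order all_algebra.
From mathcomp Require Import zify.
Import Order.TTheory GRing.Theory Num.Theory.
Local Open Scope ring_scope.

Definition meet_core (s k i t kk ii : nat) : bool :=
  match s, t with
  | 0, 0 => (k == kk) || (i == ii)
  | 1, 1 | 2, 2 => (i == ii) || ((k + i) %% 3 == (kk + ii) %% 3)
  | 0, 1 => k %% 3 == (i + kk) %% 3
  | 0, 2 => kk %% 3 == (i + k) %% 3
  | 1, 2 => (k + 2 * i) %% 3 == (kk + 2 * ii) %% 3
  | _, _ => false
  end%N.

Definition meetb (l1 l2 : line_index) : bool :=
  meet_core l1.1.1 l1.1.2 l1.2 l2.1.1 l2.1.2 l2.2 ||
  meet_core l2.1.1 l2.1.2 l2.2 l1.1.1 l1.1.2 l1.2.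

Section Sound.
Variable R : nzRingType.
Variable eta : R.
Hypothesis e3 : eta ^+ 3 = 1.

Lemma eta_mod n m : (n %% 3 = m %% 3)%N -> eta ^+ n = eta ^+ m.
Proof. by move=> H; rewrite -(expr_mod n e3) -(expr_mod m e3) H. Qed.

Ltac solve_eta :=
  rewrite ?(mulr1, mul1r, mulN1r, mulrN, mulNr, opprK, mulr0, oppr0, mul0r, mulrNN, mulrNN) -?exprD;
  try done;
  try (congr (- _));
  apply: eta_mod; lia.

Lemma nz1 (a b c : R) : nonzero4 (a, b, 1, c).
Proof. by case=> _ [_ [/eqP]]; rewrite oner_eq0. Qed.
Lemma nz2 (a b c : R) : nonzero4 (a, b, c, 1).
Proof. by case=> _ [_ [_ /eqP]]; rewrite oner_eq0. Qed.
Lemma nz3 (a b c : R) : nonzero4 (1, a, b, c).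
Proof. by case=> /eqP; rewrite oner_eq0. Qed.

Lemma core_sound (l1 l2 : line_index) :
  meet_core l1.1.1 l1.1.2 l1.2 l2.1.1 l2.1.2 l2.2 ->
  exists p, nonzero4 p /\ on_line eta l1 p /\ on_line eta l2 p.
Proof.
case: l1 => [[[s Hs] [k Hk]] [i Hi]]; case: l2 => [[[t Ht] [kk Hkk]] [ii Hii]] /=.
case: s Hs => [|[|[|s]]] Hs //; case: t Ht => [|[|[|t]]] Ht //=.
- case/orP => /eqP E.
  + subst kk; exists (0, 0, 1, eta ^+ k); rewrite /on_line /=.
    split; first exact: nz1. by split; split; solve_eta.
  + subst ii; exists (1, eta ^+ i, 0, 0); rewrite /on_line /=.
    split; first exact: nz3. by split; split; solve_eta.
- move/eqP=> E; exists (eta ^+ (kk + ii), eta ^+ (ii + k), 1, eta ^+ k).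
  rewrite /on_line /=; split; first exact: nz1. by split; split; solve_eta.
- move/eqP=> E; exists (- eta ^+ (ii + k), - eta ^+ (kk + ii), 1, eta ^+ k).
  rewrite /on_line /=; split; first exact: nz1. by split; split; solve_eta.
- case/orP => /eqP E.
  + subst ii; exists (0, eta ^+ i, 0, 1); rewrite /on_line /=.
    split; first exact: nz2. by split; split; solve_eta.
  + exists (eta ^+ (k + i), 0, 1, 0); rewrite /on_line /=.
    split; first exact: nz1. by split; split; solve_eta.
- move/eqP=> E; exists (eta ^+ (k + i), - eta ^+ (kk + ii), 1, - eta ^+ (kk + ii + 2 * i)).
  rewrite /on_line /=; split; first exact: nz1. by split; split; solve_eta.
- case/orP => /eqP E.
  + subst ii; exists (- eta ^+ i, 0, 0, 1); rewrite /on_line /=.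
    split; first exact: nz2. by split; split; solve_eta.
  + exists (0, - eta ^+ (k + i), 1, 0); rewrite /on_line /=.
    split; first exact: nz1. by split; split; solve_eta.
Qed.

Lemma meet_sound l1 l2 : meetb l1 l2 -> ~ lines_disjoint eta l1 l2.
Proof.
case/orP=> /core_sound [p [nz [h1 h2]]] D.
- exact: D p nz h1 h2.
- exact: D p nz h2 h1.
Qed.
End Sound.

Definition ordl : seq 'I_3 :=
  [:: Ordinal (n:=3) (m:=0) isT; Ordinal (n:=3) (m:=1) isT; Ordinal (n:=3) (m:=2) isT].
Lemma mem_ordl (x : 'I_3) : x \in ordl.
Proof. by case: x => [[|[|[|m]]] Hm]; rewrite // !inE -!val_eqE. Qed.
Definition E : seq line_index := [seq (sk, i) | sk <- [seq (s, k) | s <- ordl, k <- ordl], i <- ordl].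
Lemma memE l : l \in E.
Proof. case: l => [[s k] i]; apply: (allpairs_f (fun sk i => (sk, i))); last exact: mem_ordl.
  apply: (allpairs_f (fun s k => (s, k))); exact: mem_ordl. Qed.

Definition fam (l : line_index) : 'I_3 := l.1.1.

Definition c5 t1 t2 t3 a := all (fun b =>
  if (fam b == fam t1) || (fam b == fam a) || meetb b t1 || meetb b t2 || meetb b t3 then true else meetb a b) E.
Definition c4 t1 t2 t3 := all (fun a =>
  if (fam a == fam t1) || meetb a t1 || meetb a t2 || meetb a t3 then true else c5 t1 t2 t3 a) E.
Definition c3 t1 t2 := all (fun t3 =>
  if (fam t3 != fam t1) || (t3 == t1) || (t3 == t2) || meetb t1 t3 || meetb t2 t3 then true else c4 t1 t2 t3) E.
Definition c2 t1 := all (fun t2 =>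
  if (fam t2 != fam t1) || (t1 == t2) || meetb t1 t2 then true else c3 t1 t2) E.
Definition check : bool := all c2 E.

Lemma check_ok : check.
Proof. vm_compute. reflexivity. Qed.

Lemma ifE (b c : bool) : (if b then true else c) -> ~~ b -> c.
Proof. by case: b. Qed.

Lemma check_prop t1 t2 t3 a b :
  fam t2 = fam t1 -> fam t3 = fam t1 -> t1 != t2 -> t3 != t1 -> t3 != t2 ->
  fam a != fam t1 -> fam b != fam t1 -> fam b != fam a ->
  ~~ meetb t1 t2 -> ~~ meetb t1 t3 -> ~~ meetb t2 t3 ->
  ~~ meetb a t1 -> ~~ meetb a t2 -> ~~ meetb a t3 ->
  ~~ meetb b t1 -> ~~ meetb b t2 -> ~~ meetb b t3 -> meetb a b.
Proof.
move=> h2 h3 n12 n31 n32 ha hb hba m12 m13 m23 ma1 ma2 ma3 mb1 mb2 mb3.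
have /allP /(_ t1 (memE _)) := check_ok.
rewrite /c2 => /allP /(_ t2 (memE _)) /ifE.
rewrite h2 eqxx (negbTE n12) (negbTE m12) => /(_ isT).
rewrite /c3 => /allP /(_ t3 (memE _)) /ifE.
rewrite h3 eqxx (negbTE n31) (negbTE n32) (negbTE m13) (negbTE m23) => /(_ isT).
rewrite /c4 => /allP /(_ a (memE _)) /ifE.
rewrite (negbTE ha) (negbTE ma1) (negbTE ma2) (negbTE ma3) => /(_ isT).
rewrite /c5 => /allP /(_ b (memE _)) /ifE.
by rewrite (negbTE hb) (negbTE hba) (negbTE mb1) (negbTE mb2) (negbTE mb3) => /(_ isT).
Qed.

Theorem proposition3p1 (R : numClosedFieldType) (eta : R)
  (heta : 3.-primitive_root eta) (C : {set line_index}) :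
  pairwise_disjoint eta C ->
  forall s : 'I_3, #|Cpart C s| = 3%N ->
  exists k : 'I_3, k != s /\ Cpart C k = set0.
Proof.
move=> HD s Hs.
have e3 := prim_expr_order heta.
have NM : forall l1 l2, l1 \in C -> l2 \in C -> l1 != l2 -> ~~ meetb l1 l2.
  move=> l1 l2 h1 h2 n; apply/negP => /(@meet_sound _ _ e3); apply; exact: HD.
case: (pickP (fun k : 'I_3 => (k != s) && (Cpart C k == set0))) => [k /andP[k1 /eqP k2]|H].
  by exists k.
exfalso.
have hp : forall (l : line_index) (u : 'I_3), l \in Cpart C u -> l \in C /\ fam l = u.
  by move=> l u; rewrite inE => /andP[? /eqP].
have [o1 [o2 [n1s n2s n21]]] : exists o1 o2 : 'I_3, [/\ o1 != s, o2 != s & o2 != o1].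
  case: s {Hs H hp} => [[|[|[|?]]] ?] //.
  - by exists (Ordinal (n:=3) (m:=1) isT), (Ordinal (n:=3) (m:=2) isT).
  - by exists (Ordinal (n:=3) (m:=0) isT), (Ordinal (n:=3) (m:=2) isT).
  - by exists (Ordinal (n:=3) (m:=0) isT), (Ordinal (n:=3) (m:=1) isT).
have [a] : exists a, a \in Cpart C o1.
  by apply/set0Pn; move: (H o1); rewrite n1s /= => /negbT.
move=> /hp [aC fa].
have [b] : exists b, b \in Cpart C o2.
  by apply/set0Pn; move: (H o2); rewrite n2s /= => /negbT.
move=> /hp [bC fb].
have := enum_uniq (mem (Cpart C s)).
have : size (enum (Cpart C s)) = 3%N by rewrite -cardE.
have memS : forall x, x \in enum (Cpart C s) -> x \in C /\ fam x = s.
  by move=> x; rewrite mem_enum => /hp.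
case Ee: (enum (Cpart C s)) memS => [|t1 [|t2 [|t3 [|]]]] // memS _.
rewrite /= !inE !negb_or andbT => /andP[/andP[n12 n13] n23].
have [t1C f1] := memS t1 (mem_head _ _).
have [t2C f2] : t2 \in C /\ fam t2 = s by apply: memS; rewrite !inE eqxx orbT.
have [t3C f3] : t3 \in C /\ fam t3 = s by apply: memS; rewrite !inE eqxx !orbT.
have dfam : forall x y, fam x != fam y -> x != y.
  by move=> x y; apply: contraNneq => ->.
have ha : fam a != fam t1 by rewrite fa f1.
have hb : fam b != fam t1 by rewrite fb f1.
have hba : fam b != fam a by rewrite fb fa.
have e21 : fam t2 = fam t1 by rewrite f1 f2.
have e31 : fam t3 = fam t1 by rewrite f1 f3.
have n31 : t3 != t1 by rewrite eq_sym.
have n32 : t3 != t2 by rewrite eq_sym.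
have X := @check_prop t1 t2 t3 a b e21 e31 n12 n31 n32 ha hb hba.
have hat : forall t, fam t = fam t1 -> a != t.
  by move=> t ht; apply: dfam; rewrite ht.
have hbt : forall t, fam t = fam t1 -> b != t.
  by move=> t ht; apply: dfam; rewrite ht.
have : meetb a b.
  apply: X; apply: NM => //; by [apply: hat | apply: hbt].
by apply/negP; apply: NM => //; rewrite eq_sym; apply: dfam.
Qed.
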